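(* For every policy $\pi$, every bounded measurable heuristic $h:\mathcal S\to\mathbb R$ and every mixing coefficient $\lambda\in[0,1]$, $$V^*(d_0)-V^\pi(d_0)=\mathrm{Regret}(h,\lambda,\pi)+\mathrm{Bias}(h,\lambda,\pi),$$ where $$\mathrm{Regret}(h,\lambda,\pi):=\lambda\big(\widetilde V^*(d_0)-\widetilde V^\pi(d_0)\big)+\frac{1-\lambda}{1-\gamma}\big(\widetilde V^*(d^\pi)-\widetilde V^\pi(d^\pi)\big),$$ $$\mathrm{Bias}(h,\lambda,\pi):=\big(V^*(d_0)-\widetilde V^*(d_0)\big)+\frac{\gamma(1-\lambda)}{1-\gamma}\,\mathbb E_{(s,a)\sim d^\pi}\,\mathbb E_{s'\sim P(\cdot|s,a)}\big[h(s')-\widetilde V^*(s')\big].$$ (Here $\widetilde V^\pi,\widetilde V^*$ are computed in the reshaped MDP built from $h$ and $\lambda$.) Moreover, for every constant $b\in\mathbb R$, $\mathrm{Bias}(h+b,\lambda,\pi)=\mathrm{Bias}(h,\lambda,\pi)$ and $\mathrm{Regret}(h+b,\lambda,\pi)=\mathrm{Regret}(h,\lambda,\pi)$, where the left-hand sides use the reshaped MDP built from the heuristic $h+b$.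
   Context: Let $\mathcal M=(\mathcal S,\mathcal A,P,r,\gamma)$ be a discounted MDP with transition kernel $P(\cdot|s,a)$, reward $r:\mathcal S\times\mathcal A\to[0,1]$ and discount $\gamma\in[0,1)$. A policy $\pi$ is a Markov kernel from $\mathcal S$ to distributions on $\mathcal A$. For a state $s$ (resp. a distribution $d_0$ on $\mathcal S$), $\rho^\pi(s)$ (resp. $\rho^\pi(d_0)$) denotes the law of the trajectory $s_0,a_0,s_1,a_1,\dots$ with $s_0=s$ (resp. $s_0\sim d_0$), $a_t\sim\pi(\cdot|s_t)$, $s_{t+1}\sim P(\cdot|s_t,a_t)$. $V^\pi(s)=\mathbb E_{\rho^\pi(s)}[\sum_{t\ge0}\gamma^t r(s_t,a_t)]$, and $V^*=V^{\pi^*}=\sup_\pi V^\pi$ for an optimal policy $\pi^*$ (assumed to exist). For $V:\mathcal S\to\mathbb R$ and a distribution $d$ on $\mathcal S$, $V(d)=\mathbb E_{s\sim d}[V(s)]$. A fixed initial distribution $d_0$ is given; $d_t^\pi$ is the law of $s_t$ under $\rho^\pi(d_0)$, $d^\pi=(1-\gamma)\sum_{t\ge0}\gamma^t d_t^\pi$, and $d^\pi(s,a)=d^\pi(s)\pi(a|s)$. Given a bounded heuristic $h:\mathcal S\to\mathbb R$ and $\lambda\in[0,1]$, the reshaped MDP is $\widetilde{\mathcal M}=(\mathcal S,\mathcal A,P,\widetilde r,\widetilde\gamma)$ with $\widetilde r(s,a)=r(s,a)+(1-\lambda)\gamma\,\mathbb E_{s'\sim P(\cdot|s,a)}[h(s')]$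 and $\widetilde\gamma=\lambda\gamma$. $\widetilde V^\pi(s)=\mathbb E_{\rho^\pi(s)}[\sum_{t\ge0}(\lambda\gamma)^t\widetilde r(s_t,a_t)]$ is the value of $\pi$ in $\widetilde{\mathcal M}$, and $\widetilde V^*=\sup_\pi\widetilde V^\pi$, attained by an optimal policy $\widetilde\pi^*$ of $\widetilde{\mathcal M}$ (assumed to exist). *)

(* Defs.v *)
From HB Require Import structures.
From mathcomp Require Import all_boot all_order all_algebra.
From mathcomp Require Import all_classical all_reals all_analysis.
Set Implicit Arguments. Unset Strict Implicit. Unset Printing Implicit Defensive.
Import Order.TTheory GRing.Theory Num.Theory.
Import numFieldNormedType.Exports.
Local Open Scope classical_set_scope.
Local Open Scope ring_scope.

Section MDP.
Context {d1 d2 : measure_display} {S : measurableType d1} {A : measurableType d2}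
  {R : realType}.

Definition expP (P : R.-pker (S * A)%type ~> S) (f : S -> R) (sa : S * A) : R :=
  \int[P sa]_(s' in setT) f s'.

Definition expPi (pi : R.-pker S ~> A) (g : S * A -> R) (s : S) : R :=
  \int[pi s]_(a in setT) g (s, a).

Definition stepOp (P : R.-pker (S * A)%type ~> S) (pi : R.-pker S ~> A)
  (f : S -> R) : S -> R := expPi pi (expP P f).

(* E_{rho^pi(s)} [g(s_t,a_t)] = (Ppi^t (E_{a~pi} g))(s) *)
Definition expStep (P : R.-pker (S * A)%type ~> S) (pi : R.-pker S ~> A)
  (t : nat) (g : S * A -> R) (s : S) : R :=
  iter t (stepOp P pi) (expPi pi g) s.

Definition value (P : R.-pker (S * A)%type ~> S) (pi : R.-pker S ~> A)
  (rr : S * A -> R) (disc : R) (s : S) : R :=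
  limn (fun n => \sum_(0 <= t < n) disc ^+ t * expStep P pi t rr s).

Definition atDist (d : probability S R) (V : S -> R) : R :=
  \int[d]_(s in setT) V s.

(* Expectation under the normalized discounted occupancy d^pi (state marginal):
   E_{s ~ d^pi}[f s] = (1-gamma) sum_t gamma^t E_{s ~ d_t^pi}[f s] *)
Definition occS (P : R.-pker (S * A)%type ~> S) (pi : R.-pker S ~> A)
  (gamma : R) (d0 : probability S R) (f : S -> R) : R :=
  (1 - gamma) * limn (fun n => \sum_(0 <= t < n)
      gamma ^+ t * atDist d0 (iter t (stepOp P pi) f)).

(* E_{(s,a) ~ d^pi}[g(s,a)], with d^pi(s,a) = d^pi(s) pi(a|s) *)
Definition occSA (P : R.-pker (S * A)%type ~> S) (pi : R.-pker S ~> A)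
  (gamma : R) (d0 : probability S R) (g : S * A -> R) : R :=
  occS P pi gamma d0 (expPi pi g).

Definition rtilde (P : R.-pker (S * A)%type ~> S) (r : S * A -> R)
  (gamma lambda : R) (h : S -> R) (sa : S * A) : R :=
  r sa + (1 - lambda) * gamma * expP P h sa.

Definition Vtilde (P : R.-pker (S * A)%type ~> S) (r : S * A -> R)
  (gamma lambda : R) (h : S -> R) (pi : R.-pker S ~> A) : S -> R :=
  value P pi (rtilde P r gamma lambda h) (lambda * gamma).

Definition optimal (P : R.-pker (S * A)%type ~> S) (r : S * A -> R) (gamma : R)
  (pistar : R.-pker S ~> A) : Prop :=
  forall (pi : R.-pker S ~> A) (s : S), value P pi r gamma s <= value P pistar r gamma s.

Definition optimal_tilde (P : R.-pker (S * A)%type ~> S) (r : S * A -> R)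
  (gamma lambda : R) (h : S -> R) (pit : R.-pker S ~> A) : Prop :=
  forall (pi : R.-pker S ~> A) (s : S),
    Vtilde P r gamma lambda h pi s <= Vtilde P r gamma lambda h pit s.

(* Regret(h,lambda,pi); pit is the optimal policy of the reshaped MDP,
   so V~* = Vtilde ... pit. *)
Definition Regret (P : R.-pker (S * A)%type ~> S) (r : S * A -> R)
  (gamma : R) (d0 : probability S R) (h : S -> R) (lambda : R)
  (pi pit : R.-pker S ~> A) : R :=
  lambda * (atDist d0 (Vtilde P r gamma lambda h pit)
            - atDist d0 (Vtilde P r gamma lambda h pi))
  + (1 - lambda) / (1 - gamma) *
      (occS P pi gamma d0 (Vtilde P r gamma lambda h pit)
       - occS P pi gamma d0 (Vtilde P r gamma lambda h pi)).

(* Bias(h,lambda,pi); pistar optimal for the original MDP (V* = value .. pistar),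
   pit optimal for the reshaped MDP. *)
Definition Bias (P : R.-pker (S * A)%type ~> S) (r : S * A -> R)
  (gamma : R) (d0 : probability S R) (h : S -> R) (lambda : R)
  (pi pistar pit : R.-pker S ~> A) : R :=
  (atDist d0 (value P pistar r gamma) - atDist d0 (Vtilde P r gamma lambda h pit))
  + gamma * (1 - lambda) / (1 - gamma) *
      occSA P pi gamma d0
        (expP P (fun s' => h s' - Vtilde P r gamma lambda h pit s')).

End MDP.

(* Main.v *)
Require Import Defs.
From HB Require Import structures.
From mathcomp Require Import all_boot all_order all_algebra.
From mathcomp Require Import all_classical all_reals all_analysis.
From mathcomp Require Import measurable_realfun.
From mathcomp Require Import ring lra.
Set Implicit Arguments. Unset Strict Implicit. Unset Printing Implicit Defensive.
Import Order.TTheory GRing.Theory Num.Theory.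
Import numFieldNormedType.Exports.
Local Open Scope classical_set_scope.
Local Open Scope ring_scope.

Definition bm {d} {T : measurableType d} {R : realType} (f : T -> R) :=
  measurable_fun setT f /\ exists M : R, forall x, `|f x| <= M.

Section Gen.
Context d (T : measurableType d) (R : realType).
Variable mu : {measure set T -> \bar R}.
Hypothesis mu1 : mu setT = 1%E.

Lemma bm_int (f : T -> R) : bm f -> mu.-integrable setT (EFin \o f).
Proof.
case=> mf [M hM]; apply: measurable_bounded_integrable => //.
  by rewrite mu1 ltry.
exists M; split; first exact: num_real.
move=> M' /ltW MM' x _ /=; exact: le_trans (hM x) MM'.
Qed.

Lemma RintD' (f g : T -> R) : bm f -> bm g ->
  \int[mu]_(x in setT) (f x + g x) = \int[mu]_(x in setT) f x + \int[mu]_(x in setT) g x.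
Proof. by move=> bf bg; apply: RintegralD => //; exact: bm_int. Qed.

Lemma RintZ' (f : T -> R) c : bm f ->
  \int[mu]_(x in setT) (c * f x) = c * \int[mu]_(x in setT) f x.
Proof. by move=> bf; apply: RintegralZl => //; exact: bm_int. Qed.

Lemma Rintc' (c : R) : \int[mu]_(x in setT) c = c.
Proof. by rewrite Rintegral_cst // mu1 /= mulr1. Qed.

Lemma Rint_bound (f : T -> R) M : bm f -> (forall x, `|f x| <= M) ->
  `|\int[mu]_(x in setT) f x| <= M.
Proof.
move=> bf hM; apply: le_trans (le_normr_Rintegral measurableT (bm_int bf)) _.
apply: le_trans (_ : \int[mu]_(x in setT) M <= _); last by rewrite Rintc'.
apply: le_Rintegral => //.
- apply: (bm_int (f := fun x => `|f x|)); split.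
    by apply: measurableT_comp => //; case: bf.
  by exists M => x; rewrite normr_id.
- apply: (bm_int (f := fun=> M)); split => //; exists `|M| => x //.
Qed.

Lemma Rint_cvg (f_ : nat -> T -> R) (f : T -> R) M :
  (forall n, measurable_fun setT (f_ n)) -> (forall n x, `|f_ n x| <= M) ->
  (forall x, f_ ^~ x @ \oo --> f x) ->
  (fun n => \int[mu]_(x in setT) f_ n x) @ \oo --> \int[mu]_(x in setT) f x.
Proof.
move=> mf hM cf.
have mf' : forall n, measurable_fun setT (EFin \o f_ n).
  by move=> n; apply/measurable_EFinP.
have cf' : forall x, setT x -> (fun n => (EFin \o f_ n) x) @ \oo --> (EFin \o f) x.
  by move=> x _; apply: cvg_comp (cf x) _; exact: cvg_refl.
have fing : forall x : T, setT x -> ((fun=> M%:E) x : \bar R) \is a fin_num by [].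
have ig : mu.-integrable setT (fun=> M%:E).
  apply: (bm_int (f := fun=> M)); split => //; exists `|M| => x //.
have ab : forall n x, setT x -> (`|(EFin \o f_ n) x| <= (fun=> M%:E) x)%E.
  by move=> n x _; rewrite lee_fin.
have := @dominated_cvg _ _ _ mu setT measurableT (fun n => EFin \o f_ n) (EFin \o f)
  (fun=> M%:E) mf' cf' fing ig ab.
have bf : bm f.
  split; first exact: (measurable_fun_cvg (fun m => mf m) (fun x _ => cf x)).
  exists M => x; apply: (cvgr_to_le (cvg_norm (cf x))).
  by apply: nearW => n; exact: hM.
have fin := integrable_fin_num measurableT (bm_int bf).
rewrite -(fineK fin); move/fine_cvg.
by [].
Qed.
End Gen.

Section Ker.
Context d d' (X : measurableType d) (Y : measurableType d') (R : realType)
  (k : R.-pker X ~> Y).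

Lemma bm_sec (g : X * Y -> R) x : bm g -> bm (fun y => g (x, y)).
Proof.
case=> mg [M hM]; split; last by exists M.
exact: (measurableT_comp mg (pair1_measurable x)).
Qed.

Lemma bm_kint (g : X * Y -> R) : bm g -> bm (fun x => \int[k x]_(y in setT) g (x, y)).
Proof.
move=> bg; have [mg [M hM]] := bg; split; last first.
  by exists M => x; apply: Rint_bound => //; [exact: prob_kernel|exact: bm_sec].
have -> : (fun x => \int[k x]_(y in setT) g (x, y)) =
  (fun x => fine (\int[k x]_y (EFin \o (fun z => (g z + M)%R)) (x, y))%E - M).
  apply/funext => x.
  rewrite -[fine _]/(\int[k x]_(y in setT) (g (x, y) + M)).
  rewrite RintD'; [|exact: prob_kernel|exact: bm_sec|by split => //; exists `|M|].
  by rewrite Rintc' ?addrK //; exact: prob_kernel.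
apply: measurable_funB => //.
apply: measurableT_comp; first exact: fine_measurable.
apply: (measurable_fun_integral_sfinite_kernel _ k).
- move=> z /=; rewrite lee_fin -lerBlDr sub0r.
  by move: (hM z); rewrite ler_norml => /andP[].
- apply/measurable_EFinP; exact: measurable_funD.
Qed.
End Ker.

Section BM.
Context d (T : measurableType d) (R : realType).
Lemma bm_cst (c : R) : bm (fun _ : T => c).
Proof. by split => //; exists `|c|. Qed.

Lemma bm_lin (f g : T -> R) c : bm f -> bm g -> bm (fun x => f x + c * g x).
Proof.
case=> mf [M1 h1] [mg [M2 h2]]; split.
  apply: measurable_funD => //; apply: measurable_funM => //.
exists (M1 + `|c| * M2) => x; apply: le_trans (ler_normD _ _) _.
by rewrite normrM lerD // ler_wpM2l.
Qed.

Lemma bm_addc (f : T -> R) c : bm f -> bm (fun x => f x + c).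
Proof.
move=> bf; have := bm_lin 1 bf (bm_cst c).
by congr bm; apply/funext => x; rewrite mul1r.
Qed.

Lemma bm_sum (F : nat -> T -> R) n : (forall t, bm (F t)) ->
  bm (fun x => \sum_(0 <= t < n) F t x).
Proof.
move=> bF; elim: n => [|n IH].
  by have := bm_cst 0; congr bm; apply/funext => x; rewrite big_geq.
have := bm_lin 1 IH (bF n); congr bm; apply/funext => x.
by rewrite big_nat_recr //= mul1r.
Qed.
End BM.

Section Ser.
Context (R : realType).
Lemma ser_bound (q : R) (a : nat -> R) (M : R) n : 0 <= q < 1 -> (forall t, `|a t| <= M) ->
  `|\sum_(0 <= t < n) q ^+ t * a t| <= M / (1 - q).
Proof.
case/andP=> q0 q1 hM.
have M0 : 0 <= M by apply: le_trans (hM 0%N).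
apply: le_trans (ler_norm_sum _ _ _) _.
apply: le_trans (_ : \sum_(0 <= t < n) M * q ^+ t <= _).
  apply: ler_sum => t _; rewrite normrM (ger0_norm (exprn_ge0 t q0)) mulrC.
  by apply: ler_wpM2r; rewrite ?exprn_ge0.
have := geometric_seriesE M (negbT (lt_eqF q1)) => /(congr1 (fun u => u n)).
rewrite seriesEnat /= => ->.
rewrite ler_pM2r ?invr_gt0 ?subr_gt0 // ler_piMr // lerBlDr lerDl exprn_ge0 //.
Qed.

Lemma ser_cvg (q : R) (a : nat -> R) (M : R) : 0 <= q < 1 -> (forall t, `|a t| <= M) ->
  cvgn (fun n => \sum_(0 <= t < n) q ^+ t * a t).
Proof.
case/andP=> q0 q1 hM.
have M0 : 0 <= M by apply: le_trans (hM 0%N).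
apply: (@normed_cvg _ R^o (fun t => q ^+ t * a t)).
apply: (@series_le_cvg _ _ (geometric M q)).
- by move=> t; rewrite normr_ge0.
- by move=> t; rewrite /geometric /= mulr_ge0 ?exprn_ge0.
- move=> t; rewrite /geometric /= normrM (ger0_norm (exprn_ge0 t q0)) mulrC.
  by apply: ler_wpM2r; rewrite ?exprn_ge0.
- by apply: is_cvg_geometric_series; rewrite ger0_norm.
Qed.
End Ser.

Section Ops.
Context d1 d2 (S : measurableType d1) (A : measurableType d2) (R : realType).
Variable P : R.-pker (S * A)%type ~> S.
Variable pi : R.-pker S ~> A.

Lemma bm_expP (f : S -> R) : bm f -> bm (expP P f).
Proof.
case=> mf bf.
have bg : bm (fun z : (S * A) * S => f z.2).
  split; last by case: bf => M hM; exists M.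
  exact: measurableT_comp mf measurable_snd.
exact: (bm_kint P bg).
Qed.

Lemma bm_expPi (g : S * A -> R) : bm g -> bm (expPi pi g).
Proof. move=> bg; exact: (bm_kint pi bg). Qed.

Lemma bm_step (f : S -> R) : bm f -> bm (stepOp P pi f).
Proof. by move=> bf; apply: bm_expPi; apply: bm_expP. Qed.

Lemma expP_lin (f g : S -> R) c sa : bm f -> bm g ->
  expP P (fun s => f s + c * g s) sa = expP P f sa + c * expP P g sa.
Proof.
move=> bf bg; rewrite /expP RintD' //; first by rewrite RintZ' //; exact: prob_kernel.
- exact: prob_kernel.
- have := bm_lin c (bm_cst _ 0) bg; congr bm; apply/funext => x; rewrite add0r //.
Qed.

Lemma expP_cst c sa : expP P (fun _ => c) sa = c.
Proof. by rewrite /expP Rintc' //; exact: prob_kernel. Qed.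

Lemma expP_addc (f : S -> R) c sa : bm f -> expP P (fun s => f s + c) sa = expP P f sa + c.
Proof.
move=> bf; have := expP_lin 1 sa bf (bm_cst _ c).
rewrite expP_cst mul1r => <-; congr expP; apply/funext => s; rewrite mul1r.
Qed.

Lemma expP_bound (f : S -> R) M sa : bm f -> (forall s, `|f s| <= M) -> `|expP P f sa| <= M.
Proof. by move=> bf hM; apply: Rint_bound => //; exact: prob_kernel. Qed.

Lemma expPi_lin (f g : S * A -> R) c s : bm f -> bm g ->
  expPi pi (fun z => f z + c * g z) s = expPi pi f s + c * expPi pi g s.
Proof.
move=> bf bg; rewrite /expPi RintD' //; first by rewrite RintZ' //; [exact: prob_kernel|exact: bm_sec].
- exact: prob_kernel.
- exact: bm_sec.
- have := bm_lin c (bm_cst _ 0) (bm_sec s bg); congr bm; apply/funext => x; rewrite add0r //.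
Qed.

Lemma expPi_cst c s : expPi pi (fun _ => c) s = c.
Proof. by rewrite /expPi Rintc' //; exact: prob_kernel. Qed.

Lemma expPi_addc (f : S * A -> R) c s : bm f -> expPi pi (fun z => f z + c) s = expPi pi f s + c.
Proof.
move=> bf; have := expPi_lin 1 s bf (bm_cst _ c).
rewrite expPi_cst mul1r => <-; congr expPi; apply/funext => z; rewrite mul1r.
Qed.

Lemma expPi_bound (f : S * A -> R) M s : bm f -> (forall z, `|f z| <= M) -> `|expPi pi f s| <= M.
Proof. by move=> bf hM; apply: Rint_bound => //; [exact: prob_kernel|exact: bm_sec]. Qed.

Lemma step_lin (f g : S -> R) c : bm f -> bm g ->
  stepOp P pi (fun s => f s + c * g s) = (fun s => stepOp P pi f s + c * stepOp P pi g s).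
Proof.
move=> bf bg; apply/funext => s; rewrite /stepOp -expPi_lin; try exact: bm_expP.
by congr expPi; apply/funext => z; rewrite expP_lin.
Qed.

Lemma step_cst c : stepOp P pi (fun _ => c) = (fun _ => c).
Proof.
apply/funext => s; rewrite /stepOp.
rewrite (_ : expP P (fun _ => c) = fun _ => c) ?expPi_cst //.
by apply/funext => z; rewrite expP_cst.
Qed.

Lemma step_addc (f : S -> R) c : bm f ->
  stepOp P pi (fun s => f s + c) = (fun s => stepOp P pi f s + c).
Proof.
move=> bf; have := step_lin 1 bf (bm_cst _ c); rewrite step_cst.
move=> H; apply/funext => s; move: (congr1 (fun F => F s) H).
by rewrite mul1r => <-; congr stepOp; apply/funext => z; rewrite mul1r.
Qed.

Lemma step_bound (f : S -> R) M s : bm f -> (forall s, `|f s| <= M) ->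
  `|stepOp P pi f s| <= M.
Proof.
move=> bf hM; apply: expPi_bound; first exact: bm_expP.
by move=> z; exact: expP_bound.
Qed.

Lemma iter_bm (f : S -> R) t : bm f -> bm (iter t (stepOp P pi) f).
Proof. by move=> bf; elim: t => [|t IH] //=; exact: bm_step. Qed.

Lemma iter_bound (f : S -> R) M t s : bm f -> (forall s, `|f s| <= M) ->
  `|iter t (stepOp P pi) f s| <= M.
Proof.
move=> bf hM; elim: t s => [|t IH] s //=.
by apply: step_bound => //; exact: iter_bm.
Qed.

Lemma iter_lin (f g : S -> R) c t : bm f -> bm g ->
  iter t (stepOp P pi) (fun s => f s + c * g s) =
  (fun s => iter t (stepOp P pi) f s + c * iter t (stepOp P pi) g s).
Proof.
move=> bf bg; elim: t => [|t IH] //=.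
by rewrite IH step_lin //; exact: iter_bm.
Qed.

Lemma iter_addc (f : S -> R) c t : bm f ->
  iter t (stepOp P pi) (fun s => f s + c) = (fun s => iter t (stepOp P pi) f s + c).
Proof.
move=> bf; elim: t => [|t IH] //=.
by rewrite IH step_addc //; exact: iter_bm.
Qed.

Lemma step_sum (F : nat -> S -> R) n : (forall t, bm (F t)) ->
  stepOp P pi (fun s => \sum_(0 <= t < n) F t s) =
  (fun s => \sum_(0 <= t < n) stepOp P pi (F t) s).
Proof.
move=> bF; elim: n => [|n IH].
  rewrite (_ : (fun s => _) = fun _ => 0); last by apply/funext => s; rewrite big_geq.
  by rewrite step_cst; apply/funext => s; rewrite big_geq.
rewrite (_ : (fun s => \sum_(0 <= t < n.+1) F t s) =
   fun s => \sum_(0 <= t < n) F t s + 1 * F n s); last first.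
  by apply/funext => s; rewrite big_nat_recr //= mul1r.
rewrite step_lin //; last exact: bm_sum.
by rewrite IH; apply/funext => s; rewrite big_nat_recr //= mul1r.
Qed.

End Ops.

Section Val.
Context d1 d2 (S : measurableType d1) (A : measurableType d2) (R : realType).
Variable P : R.-pker (S * A)%type ~> S.
Variable pi : R.-pker S ~> A.

Definition psum (g : S * A -> R) (dl : R) n s :=
  \sum_(0 <= t < n) dl ^+ t * expStep P pi t g s.

Lemma expStep_bm g t : bm g -> bm (expStep P pi t g).
Proof. by move=> bg; apply: iter_bm; exact: bm_expPi. Qed.

Lemma expStep_bound g M t s : bm g -> (forall z, `|g z| <= M) -> `|expStep P pi t g s| <= M.
Proof.
move=> bg hM; apply: iter_bound; first exact: bm_expPi.
by move=> s'; exact: expPi_bound.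
Qed.

Lemma psum_bm g dl n : bm g -> bm (psum g dl n).
Proof.
move=> bg; rewrite /psum; apply: (bm_sum (F := fun t s => dl ^+ t * expStep P pi t g s)).
move=> t; have := bm_lin (dl ^+ t) (bm_cst _ 0) (expStep_bm t bg).
by congr bm; apply/funext => s; rewrite add0r.
Qed.

Lemma psum_cvg g dl s : bm g -> 0 <= dl < 1 -> cvgn (fun n => psum g dl n s).
Proof.
move=> bg hd; case: (bg) => _ [M hM].
rewrite /psum; exact: (ser_cvg hd (fun t => expStep_bound t s bg hM)).
Qed.

Lemma psum_bound g dl M n s : bm g -> 0 <= dl < 1 -> (forall z, `|g z| <= M) ->
  `|psum g dl n s| <= M / (1 - dl).
Proof. by move=> bg hd hM; apply: ser_bound => // t; exact: expStep_bound. Qed.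

Lemma value_cvg g dl s : bm g -> 0 <= dl < 1 ->
  (fun n => psum g dl n s) @ \oo --> value P pi g dl s.
Proof. by move=> bg hd; have := psum_cvg (s := s) bg hd; rewrite /psum /value. Qed.

Lemma value_bm g dl : bm g -> 0 <= dl < 1 -> bm (value P pi g dl).
Proof.
move=> bg hd; case: (bg) => _ [M hM]; split.
  apply: (measurable_fun_cvg (h := fun n => psum g dl n)).
    by move=> n; case: (psum_bm dl n bg).
  by move=> s _; exact: (value_cvg (s := s) bg hd).
exists (M / (1 - dl)) => s; apply: (cvgr_to_le (cvg_norm (value_cvg (s := s) bg hd))).
by apply: nearW => n; exact: psum_bound.
Qed.

Lemma psumS g dl n : bm g ->
  psum g dl n.+1 = (fun s => expPi pi g s + dl * stepOp P pi (psum g dl n) s).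
Proof.
move=> bg; rewrite /psum step_sum; last first.
  move=> t; have := bm_lin (dl ^+ t) (bm_cst _ 0) (expStep_bm t bg).
  by congr bm; apply/funext => s; rewrite add0r.
apply/funext => s; rewrite big_nat_recl //= expr0 mul1r /expStep /=; congr (_ + _).
rewrite big_distrr /=; apply: eq_bigr => t _.
have := step_lin P pi (dl ^+ t) (bm_cst _ 0) (expStep_bm t bg).
move/(congr1 (fun F => F s)); rewrite step_cst.
rewrite (_ : (fun s0 => 0 + dl ^+ t * expStep P pi t g s0) = (fun s0 => dl ^+ t * expStep P pi t g s0)); last by apply/funext => z; rewrite add0r.
by move=> ->; rewrite add0r exprS mulrA.
Qed.

Lemma bellman g dl s : bm g -> 0 <= dl < 1 ->
  value P pi g dl s = expPi pi g s + dl * stepOp P pi (value P pi g dl) s.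
Proof.
move=> bg hd; case: (bg) => _ [M hM].
have bV := value_bm bg hd.
have H1 : (fun n => psum g dl n.+1 s) @ \oo --> expPi pi g s + dl * stepOp P pi (value P pi g dl) s.
  under eq_fun do rewrite psumS //.
  apply: cvgD; first exact: cvg_cst.
  apply: cvgMr.
  rewrite /stepOp /expPi.
  have pk : pi s setT = 1%E by exact: prob_kernel.
  apply: (Rint_cvg pk (M := M / (1 - dl))).
  - by move=> n; case: (bm_sec s (bm_expP P (psum_bm dl n bg))).
  - by move=> n a; apply: expP_bound; [exact: psum_bm|move=> s'; exact: psum_bound].
  - move=> a; rewrite /expP.
    have pk' : P (s, a) setT = 1%E by exact: prob_kernel.
    apply: (Rint_cvg pk' (M := M / (1 - dl))).
    + by move=> n; case: (psum_bm dl n bg).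
    + by move=> n s'; exact: psum_bound.
    + by move=> s'; exact: value_cvg.
have H2 : (fun n => psum g dl n s) @ \oo -->
    expPi pi g s + dl * stepOp P pi (value P pi g dl) s.
  by rewrite -(cvg_shiftS (fun n => psum g dl n s)).
rewrite {1}/value; apply: cvg_lim; first exact: Rhausdorff.
exact: H2.
Qed.

Lemma value_addc g dl c s : bm g -> 0 <= dl < 1 ->
  value P pi (fun z => g z + c) dl s = value P pi g dl s + c / (1 - dl).
Proof.
move=> bg hd; rewrite {1}/value.
have -> : (fun n => \sum_(0 <= t < n) dl ^+ t * expStep P pi t (fun z => g z + c) s) =
  (fun n => psum g dl n s + series (geometric c dl) n).
  apply/funext => n; rewrite /psum seriesEnat /= -big_split /=; apply: eq_bigr => t _.
  rewrite /expStep (_ : expPi pi (fun z => g z + c) = fun s => expPi pi g s + c).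
    by rewrite iter_addc ?mulrDr ?[c * _]mulrC //; exact: bm_expPi.
  by apply/funext => s'; rewrite expPi_addc.
apply: cvg_lim => //; apply: cvgD; first exact: value_cvg.
by apply: cvg_geometric_series; case/andP: hd => h0 h1; rewrite ger0_norm.
Qed.

End Val.

Section Occ.
Context d1 d2 (S : measurableType d1) (A : measurableType d2) (R : realType).
Variable P : R.-pker (S * A)%type ~> S.
Variable pi : R.-pker S ~> A.
Variable gamma : R.
Hypothesis hg : 0 <= gamma < 1.
Variable d0 : probability S R.

Let p1 : d0 setT = 1%E. Proof. exact: probability_setT. Qed.

Definition osum (f : S -> R) n :=
  \sum_(0 <= t < n) gamma ^+ t * atDist d0 (iter t (stepOp P pi) f).

Lemma atDist_bound (f : S -> R) M : bm f -> (forall s, `|f s| <= M) -> `|atDist d0 f| <= M.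
Proof. by move=> bf hM; apply: Rint_bound. Qed.

Lemma osum_cvg f : bm f -> cvgn (osum f).
Proof.
move=> bf; case: (bf) => _ [M hM]; rewrite /osum.
apply: (ser_cvg hg (M := M)) => t; apply: atDist_bound; first exact: iter_bm.
by move=> s; exact: iter_bound.
Qed.

Lemma occ_lim f : bm f -> osum f @ \oo --> (occS P pi gamma d0 f / (1 - gamma)).
Proof.
move=> bf; rewrite /occS mulrC mulrA mulVf ?mul1r; last first.
  by case/andP: hg => _ h1; rewrite subr_eq0 eq_sym lt_eqF.
exact: (osum_cvg bf).
Qed.

Lemma occ_lin (f g : S -> R) c : bm f -> bm g ->
  occS P pi gamma d0 (fun s => f s + c * g s) = occS P pi gamma d0 f + c * occS P pi gamma d0 g.
Proof.
move=> bf bg; rewrite /occS.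
rewrite (_ : (fun n => _) = fun n => osum f n + c * osum g n); last first.
  apply/funext => n; rewrite /osum big_distrr -big_split /=; apply: eq_bigr => t _.
  rewrite iter_lin // /atDist RintD' //; first last.
  - by have := bm_lin c (bm_cst _ 0) (iter_bm P pi t bg); congr bm; apply/funext => s; rewrite add0r.
  - exact: iter_bm.
  rewrite RintZ' //; last exact: iter_bm.
  by rewrite mulrDr mulrCA.
rewrite limD; last 2 first.
- exact: osum_cvg.
- by apply: is_cvgMr; exact: osum_cvg.
rewrite limM; last 2 first.
- exact: is_cvg_cst.
- exact: osum_cvg.
have -> : limn (fun=> c) = c by apply: cvg_lim; [exact: Rhausdorff|exact: cvg_cst].
by rewrite mulrDr mulrCA.
Qed.

Lemma occ_cst c : occS P pi gamma d0 (fun _ => c) = c.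
Proof.
case/andP: hg => h0 h1.
rewrite /occS (_ : (fun n => _) = series (geometric c gamma)); last first.
  apply/funext => n; rewrite seriesEnat /=; apply: eq_bigr => t _.
  have -> : iter t (stepOp P pi) (fun _ => c) = fun _ => c.
    by elim: t => [|t IH] //=; rewrite IH step_cst.
  by rewrite /atDist Rintc' // mulrC.
have hz : `|gamma| < 1 by rewrite ger0_norm.
rewrite (cvg_lim _ (cvg_geometric_series (a := c) hz)); last exact: Rhausdorff.
by rewrite mulrCA mulfV ?mulr1 // subr_eq0 eq_sym lt_eqF.
Qed.

Lemma occ_addc (f : S -> R) c : bm f ->
  occS P pi gamma d0 (fun s => f s + c) = occS P pi gamma d0 f + c.
Proof.
move=> bf; have := occ_lin 1 bf (bm_cst _ c); rewrite occ_cst mul1r => <-.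
by congr occS; apply/funext => s; rewrite mul1r.
Qed.

Lemma atDist_addc (f : S -> R) c : bm f ->
  atDist d0 (fun s => f s + c) = atDist d0 f + c.
Proof. by move=> bf; rewrite /atDist RintD' ?Rintc' //; exact: bm_cst. Qed.

Lemma occ_F2 (f : S -> R) : bm f ->
  occS P pi gamma d0 f - gamma * occS P pi gamma d0 (stepOp P pi f) =
  (1 - gamma) * atDist d0 f.
Proof.
move=> bf.
have bs := bm_step P pi bf.
have E : forall n, osum f n.+1 = atDist d0 f + gamma * osum (stepOp P pi f) n.
  move=> n; rewrite /osum big_nat_recl //= expr0 mul1r; congr (_ + _).
  rewrite big_distrr /=; apply: eq_bigr => t _.
  by rewrite -iterSr exprS mulrA.
have C : osum f @ \oo --> atDist d0 f + gamma * (occS P pi gamma d0 (stepOp P pi f) / (1 - gamma)).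
  rewrite -cvg_shiftS; under eq_fun do rewrite E.
  by apply: cvgD; [exact: cvg_cst|apply: cvgMr; exact: occ_lim].
have H1 := cvg_lim (@Rhausdorff R) (occ_lim bf).
have H2 := cvg_lim (@Rhausdorff R) C.
rewrite H1 in H2.
have g1 : 1 - gamma != 0 by case/andP: hg => _ h1; rewrite subr_eq0 eq_sym lt_eqF.
rewrite -[occS _ _ _ _ f](mulfVK g1) H2.
by field.
Qed.

End Occ.

Lemma final_alg (R : realType) (g l EVs EV EVt EVp OV OVt OVp Or Oh OsV OsVt OsVp : R) :
  1 - g != 0 ->
  OV - g * OsV = (1 - g) * EV ->
  OVp - g * OsVp = (1 - g) * EVp ->
  OVt - g * OsVt = (1 - g) * EVt ->
  OV = Or + g * OsV ->
  OVp = Or + (1 - l) * g * Oh + l * g * OsVp ->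
  EVs - EV = l * (EVt - EVp) + (1 - l) / (1 - g) * (OVt - OVp)
    + ((EVs - EVt) + g * (1 - l) / (1 - g) * (Oh - OsVt)).
Proof.
move=> g1 F2V F2Vp F2Vt O1 O2.
have Or_eq : Or = (1 - g) * EV by rewrite -F2V O1; ring.
have key : (1 - l) * (OVt - OVp) + g * (1 - l) * (Oh - OsVt) = (1 - g) * ((1 - l) * EVt - EV + l * EVp).
  have eVt : OVt = (1 - g) * EVt + g * OsVt by rewrite -F2Vt; ring.
  have eVp : OVp = (1 - g) * EVp + g * OsVp by rewrite -F2Vp; ring.
  move: O2; rewrite eVp Or_eq => O2'.
  rewrite eVt; apply/eqP; rewrite -subr_eq0; apply/eqP.
  transitivity (- (((1 - g) * EVp + g * OsVp) - ((1 - g) * EV + (1 - l) * g * Oh + l * g * OsVp))).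
    ring.
  by rewrite O2' subrr oppr0.
have K2 : (1 - l) / (1 - g) * (OVt - OVp) + g * (1 - l) / (1 - g) * (Oh - OsVt) = (1 - l) * EVt - EV + l * EVp.
  by rewrite -[RHS](mulKf g1) -key; field.
lra.
Qed.

Lemma eq4 {T U : Type} (f : T -> T -> T -> T -> U) a b c d a' b' c' d' :
  a = a' -> b = b' -> c = c' -> d = d' -> f a b c d = f a' b' c' d'.
Proof. by move=> -> -> -> ->. Qed.

Lemma bias_alg (R : realType) (g l b EVs EVt Q : R) :
  1 - g != 0 -> 1 - l * g != 0 ->
  (EVs - (EVt + (1 - l) * g * b / (1 - l * g))) +
    g * (1 - l) / (1 - g) * (Q + (b - (1 - l) * g * b / (1 - l * g)))
  = (EVs - EVt) + g * (1 - l) / (1 - g) * Q.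
Proof. by move=> h1 h2; field; apply/andP. Qed.

Lemma regret_alg (R : realType) (l k c x y z w : R) :
  l * ((x + c) - (y + c)) + k * ((z + c) - (w + c)) = l * (x - y) + k * (z - w).
Proof. ring. Qed.

Theorem theorem1
  (d1 d2 : measure_display) (S : measurableType d1) (A : measurableType d2)
  (R : realType)
  (P : R.-pker (S * A)%type ~> S) (r : S * A -> R) (gamma : R)
  (d0 : probability S R)
  (hr_meas : measurable_fun setT r)
  (hr01 : forall sa, 0 <= r sa <= 1)
  (hgamma : 0 <= gamma < 1)
  (pistar : R.-pker S ~> A) (hpistar : optimal P r gamma pistar)
  (pi : R.-pker S ~> A) (h : S -> R)
  (hh_meas : measurable_fun setT h) (hh_bdd : exists M : R, forall s, `|h s| <= M)
  (lambda : R) (hlambda : 0 <= lambda <= 1)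
  (pit : R.-pker S ~> A) (hpit : optimal_tilde P r gamma lambda h pit) :
  atDist d0 (value P pistar r gamma) - atDist d0 (value P pi r gamma)
    = Regret P r gamma d0 h lambda pi pit + Bias P r gamma d0 h lambda pi pistar pit
  /\
  (forall (b : R) (pitb : R.-pker S ~> A),
     optimal_tilde P r gamma lambda (fun s => h s + b) pitb ->
     Bias P r gamma d0 (fun s => h s + b) lambda pi pistar pitb
       = Bias P r gamma d0 h lambda pi pistar pit
     /\ Regret P r gamma d0 (fun s => h s + b) lambda pi pitb
       = Regret P r gamma d0 h lambda pi pit).
Proof.
have hr : bm r.
  split => //; exists 1 => sa; have /andP[h0 h1] := hr01 sa; rewrite ger0_norm //.
have hh : bm h by split.
have hg := hgamma.
case/andP: hgamma => g0 g1.
case/andP: hlambda => l0 l1.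
have g1' : 1 - gamma != 0 by rewrite subr_eq0 eq_sym lt_eqF.
have hd : 0 <= lambda * gamma < 1.
  apply/andP; split; first exact: mulr_ge0.
  by apply: le_lt_trans g1; rewrite ler_piMl.
have d1' : 1 - lambda * gamma != 0 by case/andP: hd => _ h1; rewrite subr_eq0 eq_sym lt_eqF.
pose rt := rtilde P r gamma lambda h.
have brt : bm rt by exact: (bm_lin ((1 - lambda) * gamma) hr (bm_expP P hh)).
pose V := value P pi r gamma.
pose Vp := value P pi rt (lambda * gamma).
pose Vt := value P pit rt (lambda * gamma).
have bV : bm V by exact: value_bm.
have bVp : bm Vp by exact: value_bm.
have bVt : bm Vt by exact: value_bm.
have bEr : bm (expPi pi r) by exact: bm_expPi.
have bEh : bm (expPi pi (expP P h)) by apply: bm_expPi; exact: bm_expP.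
split.
  have O1 : occS P pi gamma d0 V =
      occS P pi gamma d0 (expPi pi r) + gamma * occS P pi gamma d0 (stepOp P pi V).
    rewrite -(occ_lin P pi hg d0) //; last exact: bm_step.
    have EV : V = (fun s => expPi pi r s + gamma * stepOp P pi V s).
      by apply/funext => s; rewrite {1}/V bellman.
    by rewrite {1}EV.
  have O2 : occS P pi gamma d0 Vp =
      occS P pi gamma d0 (expPi pi r) + (1 - lambda) * gamma * occS P pi gamma d0 (expPi pi (expP P h))
      + lambda * gamma * occS P pi gamma d0 (stepOp P pi Vp).
    have EVp : Vp = (fun s => (expPi pi r s + (1 - lambda) * gamma * expPi pi (expP P h) s)
                              + lambda * gamma * stepOp P pi Vp s).
      apply/funext => s; rewrite {1}/Vp bellman // -/Vp; congr (_ + _).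
      rewrite /rt /rtilde expPi_lin //; exact: bm_expP.
    have bF : bm (fun s => expPi pi r s + (1 - lambda) * gamma * expPi pi (expP P h) s).
      exact: bm_lin.
    have L1 := occ_lin P pi hg d0 (lambda * gamma) bF (bm_step P pi bVp).
    have L2 := occ_lin P pi hg d0 ((1 - lambda) * gamma) bEr bEh.
    apply: (eq_trans (f_equal (occS P pi gamma d0) EVp)).
    apply: (eq_trans L1).
    exact: (f_equal2 +%R L2 erefl).
  have E3a : (fun s' => h s' - Vt s') = (fun s' => h s' + -1 * Vt s').
    by apply/funext => s'; rewrite mulN1r.
  have E3b : expP P (fun s' => h s' - Vt s') = (fun z => expP P h z + -1 * expP P Vt z).
    apply/funext => z.
    exact: (eq_trans (f_equal (fun F => expP P F z) E3a) (expP_lin P (-1) z hh bVt)).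
  have E3 : expPi pi (expP P (fun s' => h s' - Vt s')) =
      (fun s => expPi pi (expP P h) s + -1 * stepOp P pi Vt s).
    apply/funext => s; apply: (eq_trans (f_equal (fun F => expPi pi F s) E3b)).
    exact: (expPi_lin pi (-1) s (bm_expP P hh) (bm_expP P bVt)).
  have O3 : occSA P pi gamma d0 (expP P (fun s' => h s' - Vt s')) =
      occS P pi gamma d0 (expPi pi (expP P h)) - occS P pi gamma d0 (stepOp P pi Vt).
    rewrite /occSA; apply: (eq_trans (f_equal (occS P pi gamma d0) E3)).
    apply: (eq_trans (occ_lin P pi hg d0 (-1) bEh (bm_step P pi bVt))).
    by rewrite mulN1r.
  have F2V := occ_F2 P pi hg d0 bV.
  have F2Vp := occ_F2 P pi hg d0 bVp.
  have F2Vt := occ_F2 P pi hg d0 bVt.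
  rewrite /Regret /Bias O3.
  exact: (final_alg _ g1' F2V F2Vp F2Vt O1 O2).
move=> b pitb hb.
pose c := (1 - lambda) * gamma * b / (1 - lambda * gamma).
have Sh : forall (q : R.-pker S ~> A) s,
    Vtilde P r gamma lambda (fun s => h s + b) q s = Vtilde P r gamma lambda h q s + c.
  move=> q s; rewrite /Vtilde.
  have Er : rtilde P r gamma lambda (fun s => h s + b) = (fun sa => rt sa + (1 - lambda) * gamma * b).
    by apply/funext => sa; rewrite /rt /rtilde expP_addc //; ring.
  apply: (eq_trans (f_equal (fun g => value P q g (lambda * gamma) s) Er)).
  exact: (value_addc P q ((1 - lambda) * gamma * b) s brt hd).
have Et' : forall s, Vtilde P r gamma lambda (fun s => h s + b) pitb s = Vt s + c.
  move=> s.
  have Eq : Vtilde P r gamma lambda h pitb s = Vt s.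
    apply: le_anti; apply/andP; split; first exact: hpit.
    by have := hb pit s; rewrite !Sh lerD2r.
  by rewrite Sh Eq.
have Et : Vtilde P r gamma lambda (fun s => h s + b) pitb = (fun s => Vt s + c).
  by apply/funext => s; rewrite Et'.
have Ep : Vtilde P r gamma lambda (fun s => h s + b) pi = (fun s => Vp s + c).
  by apply/funext => s; rewrite Sh.
have E3a : (fun s' => h s' - Vt s') = (fun s' => h s' + -1 * Vt s').
  by apply/funext => s'; rewrite mulN1r.
have bhVt : bm (fun s' => h s' - Vt s') by rewrite E3a; exact: bm_lin.
have A1 : atDist d0 (Vtilde P r gamma lambda (fun s => h s + b) pitb) = atDist d0 Vt + c.
  exact: (eq_trans (f_equal (atDist d0) Et) (atDist_addc d0 c bVt)).
have A1p : atDist d0 (Vtilde P r gamma lambda (fun s => h s + b) pi) = atDist d0 Vp + c.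
  exact: (eq_trans (f_equal (atDist d0) Ep) (atDist_addc d0 c bVp)).
have O1 : occS P pi gamma d0 (Vtilde P r gamma lambda (fun s => h s + b) pitb) =
    occS P pi gamma d0 Vt + c.
  exact: (eq_trans (f_equal (occS P pi gamma d0) Et) (occ_addc P pi hg d0 c bVt)).
have O1p : occS P pi gamma d0 (Vtilde P r gamma lambda (fun s => h s + b) pi) =
    occS P pi gamma d0 Vp + c.
  exact: (eq_trans (f_equal (occS P pi gamma d0) Ep) (occ_addc P pi hg d0 c bVp)).
split.
  have E4 : (fun s' => h s' + b - Vtilde P r gamma lambda (fun s => h s + b) pitb s') =
      (fun s' => (h s' - Vt s') + (b - c)).
    by apply/funext => s'; rewrite Et'; ring.
  have E5a : expP P (fun s' => (h s' - Vt s') + (b - c)) =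
      (fun z => expP P (fun s' => h s' - Vt s') z + (b - c)).
    by apply/funext => z; exact: (expP_addc P (b - c) z bhVt).
  have E5 : expPi pi (expP P (fun s' => h s' + b - Vtilde P r gamma lambda (fun s => h s + b) pitb s')) =
      (fun s => expPi pi (expP P (fun s' => h s' - Vt s')) s + (b - c)).
    apply/funext => s.
    apply: (eq_trans (f_equal (fun F => expPi pi (expP P F) s) E4)).
    apply: (eq_trans (f_equal (fun F => expPi pi F s) E5a)).
    exact: (expPi_addc pi (b - c) s (bm_expP P bhVt)).
  have A2 : occS P pi gamma d0 (expPi pi (expP P (fun s' => h s' + b - Vtilde P r gamma lambda (fun s => h s + b) pitb s'))) =
      occS P pi gamma d0 (expPi pi (expP P (fun s' => h s' - Vt s'))) + (b - c).
    exact: (eq_trans (f_equal (occS P pi gamma d0) E5) (occ_addc P pi hg d0 (b - c) (bm_expPi pi (bm_expP P bhVt)))).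
  have B1 : Bias P r gamma d0 (fun s => h s + b) lambda pi pistar pitb =
      (atDist d0 (value P pistar r gamma) - (atDist d0 Vt + c)) +
      gamma * (1 - lambda) / (1 - gamma) * (occS P pi gamma d0 (expPi pi (expP P (fun s' => h s' - Vt s'))) + (b - c)).
    exact: (f_equal2 (fun x y => (atDist d0 (value P pistar r gamma) - x) + gamma * (1 - lambda) / (1 - gamma) * y) A1 A2).
  have B2 : Bias P r gamma d0 h lambda pi pistar pit =
      (atDist d0 (value P pistar r gamma) - atDist d0 Vt) +
      gamma * (1 - lambda) / (1 - gamma) * occS P pi gamma d0 (expPi pi (expP P (fun s' => h s' - Vt s'))).
    by [].
  apply: (eq_trans B1); apply: (eq_trans _ (esym B2)).
  exact: bias_alg.
have R1 := eq4 (fun x y z w => lambda * (x - y) + (1 - lambda) / (1 - gamma) * (z - w)) A1 A1p O1 O1p.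
apply: (eq_trans R1).
exact: regret_alg.
Qed.
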